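(* In the general public project problem (any $n\ge2$, any $c>0$, any cost shares $c_i>0$ with $\sum_i c_i=c$), there is no pay-only Groves mechanism that dominates the VCG mechanism.
   Context: General public project problem: $n\ge2$ players, decisions $D=\{0,1\}$, $\Theta_i=[0,c]$ with $c>0$, $v_i(d,\theta_i)=d(\theta_i-c_i)$ where $c_i>0$ and $\sum_ic_i=c$; efficient decision $f(\theta)=1$ iff $\sum_i\theta_i\ge c$. A Groves mechanism has taxes $t_i(\theta)=\sum_{j\ne i}v_j(f(\theta),\theta_j)+h_i(\theta_{-i})$ for arbitrary $h_i$; player $i$'s utility is $v_i(f(\theta),\theta_i)+t_i(\theta)$. The VCG (Clarke) mechanism uses $h_i(\theta_{-i})=-\max_{d\in D}\sum_{j\ne i}v_j(d,\theta_j)$. Pay-only: $t_i(\theta)\le0$ for all $\theta,i$. $t'$ dominates $t$ if $t_i(\theta)\le t'_i(\theta)$ for all $\theta,i$, strictly for some $\theta,i$. *)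

(* Defs.v *)
From Stdlib Require Import Reals Lra Lia Arith.
Open Scope R_scope.

(* Players are 0, ..., n-1.  A type profile is theta : nat -> R
   (only the values at i < n matter). *)

Fixpoint sumR (n : nat) (f : nat -> R) : R :=
  match n with
  | O => 0
  | S m => sumR m f + f m
  end.

Definition sum_excl (n i : nat) (f : nat -> R) : R :=
  sumR n (fun j => if Nat.eqb j i then 0 else f j).

Definition valid_profile (n : nat) (c : R) (theta : nat -> R) : Prop :=
  forall i, (i < n)%nat -> 0 <= theta i <= c.

(* decisions D = {0,1}, encoded as bool (true = 1 = build) *)
Definition valuation (d : bool) (theta_i c_i : R) : R :=
  if d then theta_i - c_i else 0.

Definition efficient (n : nat) (c : R) (theta : nat -> R) : bool :=
  if Rle_dec c (sumR n theta) then true else false.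

(* h i theta is h_i(theta_{-i}): it may only depend on the types of the
   other players (on the domain of valid profiles). *)
Definition depends_only_on_others (n : nat) (c : R) (h : nat -> (nat -> R) -> R) : Prop :=
  forall i theta theta', (i < n)%nat ->
    valid_profile n c theta -> valid_profile n c theta' ->
    (forall j, (j < n)%nat -> j <> i -> theta j = theta' j) ->
    h i theta = h i theta'.

Definition groves_tax (n : nat) (c : R) (cs : nat -> R) (h : nat -> (nat -> R) -> R)
    (i : nat) (theta : nat -> R) : R :=
  sum_excl n i (fun j => valuation (efficient n c theta) (theta j) (cs j)) + h i theta.

Definition vcg_h (n : nat) (cs : nat -> R) (i : nat) (theta : nat -> R) : R :=
  - Rmax (sum_excl n i (fun j => valuation false (theta j) (cs j)))
         (sum_excl n i (fun j => valuation true (theta j) (cs j))).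

Definition pay_only (n : nat) (c : R) (t : nat -> (nat -> R) -> R) : Prop :=
  forall theta i, valid_profile n c theta -> (i < n)%nat -> t i theta <= 0.

Definition dominates (n : nat) (c : R) (t' t : nat -> (nat -> R) -> R) : Prop :=
  (forall theta i, valid_profile n c theta -> (i < n)%nat -> t i theta <= t' i theta) /\
  (exists theta i, valid_profile n c theta /\ (i < n)%nat /\ t i theta < t' i theta).

(* Main.v *)
Require Import Defs.
From Stdlib Require Import Reals Lra Lia Arith.
Open Scope R_scope.

Lemma sumR_ext n f g : (forall j, (j < n)%nat -> f j = g j) -> sumR n f = sumR n g.
Proof.
  induction n; simpl; intros H; [reflexivity|].
  rewrite IHn by (intros; apply H; lia). rewrite H by lia. reflexivity.
Qed.

Lemma sumR_minus n f g : sumR n (fun j => f j - g j) = sumR n f - sumR n g.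
Proof. induction n; simpl; [lra|]. rewrite IHn; lra. Qed.

Lemma sumR_nonneg n f : (forall j, (j < n)%nat -> 0 <= f j) -> 0 <= sumR n f.
Proof.
  induction n; simpl; intros H; [lra|].
  assert (0 <= sumR n f) by (apply IHn; intros; apply H; lia).
  assert (0 <= f n) by (apply H; lia). lra.
Qed.

Lemma sumR_zero n : sumR n (fun _ => 0) = 0.
Proof. induction n; simpl; [lra|]. rewrite IHn; lra. Qed.

Lemma sum_excl_split n i f : (i < n)%nat -> sumR n f = sum_excl n i f + f i.
Proof.
  unfold sum_excl. induction n; intros Hi; [lia|]. simpl.
  destruct (Nat.eqb n i) eqn:E.
  - apply Nat.eqb_eq in E; subst.
    rewrite (sumR_ext i (fun j => if Nat.eqb j i then 0 else f j) f); [lra|].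
    intros j Hj. destruct (Nat.eqb j i) eqn:E2; [apply Nat.eqb_eq in E2; lia|reflexivity].
  - apply Nat.eqb_neq in E. rewrite IHn by lia. lra.
Qed.

Lemma sum_excl_ext n i f g :
  (forall j, (j < n)%nat -> j <> i -> f j = g j) -> sum_excl n i f = sum_excl n i g.
Proof.
  intros H. unfold sum_excl. apply sumR_ext. intros j Hj.
  destruct (Nat.eqb j i) eqn:E; [reflexivity|]. apply Nat.eqb_neq in E. auto.
Qed.

Lemma sum_excl_minus n i f g :
  sum_excl n i (fun j => f j - g j) = sum_excl n i f - sum_excl n i g.
Proof.
  unfold sum_excl. rewrite <- sumR_minus. apply sumR_ext. intros j _.
  destruct (Nat.eqb j i); lra.
Qed.

Lemma sum_excl_false n i th cs :
  sum_excl n i (fun j => valuation false (th j) (cs j)) = 0.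
Proof.
  unfold sum_excl, valuation. transitivity (sumR n (fun _ => 0)); [|apply sumR_zero]. apply sumR_ext.
  intros; destruct (Nat.eqb j i); reflexivity.
Qed.

Definition upd (th : nat -> R) (i : nat) (x : R) : nat -> R :=
  fun j => if Nat.eqb j i then x else th j.

Theorem theorem4 (n : nat) (c : R) (cs : nat -> R) :
  (2 <= n)%nat -> 0 < c ->
  (forall i, (i < n)%nat -> 0 < cs i) ->
  sumR n cs = c ->
  ~ (exists h : nat -> (nat -> R) -> R,
        depends_only_on_others n c h /\
        pay_only n c (groves_tax n c cs h) /\
        dominates n c (groves_tax n c cs h) (groves_tax n c cs (vcg_h n cs))).
Proof.
  intros Hn Hc Hcs Hsum [h [Hdep [Hpay [_ [th [i [Hv [Hi Hlt]]]]]]]].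
  unfold groves_tax in Hlt.
  assert (Hle : h i th <= vcg_h n cs i th); [|lra].
  set (A := sum_excl n i (fun j => valuation true (th j) (cs j))).
  assert (Hupd : forall x, 0 <= x <= c -> valid_profile n c (upd th i x)).
  { intros x Hx j Hj. unfold upd. destruct (Nat.eqb j i); auto. }
  assert (Hh : forall x, 0 <= x <= c -> h i (upd th i x) = h i th).
  { intros x Hx. apply Hdep; auto. intros j Hj Hji. unfold upd.
    apply Nat.eqb_neq in Hji. rewrite Hji. reflexivity. }
  assert (HsA : forall x d, sum_excl n i (fun j => valuation d (upd th i x j) (cs j))
                          = sum_excl n i (fun j => valuation d (th j) (cs j))).
  { intros x d. apply sum_excl_ext. intros j Hj Hji. unfold upd.
    apply Nat.eqb_neq in Hji. rewrite Hji. reflexivity. }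
  (* decision 1 achievable *)
  assert (H1 : h i th <= - A).
  { assert (Hc1 : 0 <= c <= c) by lra.
    pose proof (Hpay (upd th i c) i (Hupd c Hc1) Hi) as P.
    unfold groves_tax in P. rewrite (Hh c Hc1), HsA in P.
    unfold efficient in P.
    destruct (Rle_dec c (sumR n (upd th i c))) as [_|Hn1].
    - unfold A; lra.
    - exfalso. apply Hn1. rewrite (sum_excl_split n i) by exact Hi.
      unfold upd at 2. rewrite Nat.eqb_refl.
      assert (0 <= sum_excl n i (upd th i c)); [|lra].
      unfold sum_excl. apply sumR_nonneg. intros j Hj.
      destruct (Nat.eqb j i) eqn:E; [lra|]. unfold upd; rewrite E. apply Hv; auto. }
  unfold vcg_h. rewrite sum_excl_false. fold A.
  assert (HA : A = sum_excl n i th - sum_excl n i cs).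
  { unfold A, valuation. apply sum_excl_minus. }
  assert (Hcsx : sum_excl n i cs = c - cs i).
  { rewrite (sum_excl_split n i cs Hi) in Hsum. lra. }
  pose proof (Hcs i Hi) as Hci.
  destruct (Rlt_dec (sum_excl n i th) c) as [Hs|Hs].
  - (* decision 0 achievable *)
    assert (Hc0 : 0 <= 0 <= c) by lra.
    pose proof (Hpay (upd th i 0) i (Hupd 0 Hc0) Hi) as P.
    unfold groves_tax in P. rewrite (Hh 0 Hc0), HsA in P.
    unfold efficient in P.
    destruct (Rle_dec c (sumR n (upd th i 0))) as [Hn0|_].
    + exfalso. rewrite (sum_excl_split n i) in Hn0 by exact Hi.
      unfold upd at 2 in Hn0. rewrite Nat.eqb_refl in Hn0.
      assert (sum_excl n i (upd th i 0) = sum_excl n i th).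
      { apply sum_excl_ext. intros j Hj Hji. unfold upd.
        apply Nat.eqb_neq in Hji. rewrite Hji. reflexivity. }
      lra.
    + rewrite sum_excl_false in P. unfold Rmax.
      destruct (Rle_dec 0 A); lra.
  - unfold Rmax. destruct (Rle_dec 0 A); lra.
Qed.
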